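(* Let $\lambda$ be a cardinal, let $M\prec\mathcal{C}$ be $\lambda$-saturated, let $A$ be a set with $P^M\subseteq A\subseteq M$, and let $p(\bar x)$ be a partial type over $A$ with $|p|<\lambda$, where $\bar x$ is a (possibly infinite) tuple of fewer than $\lambda$ variables. Then there is $p^*(\bar x)\in S_*(A)$ extending $p$.
   Context: Standing assumptions: $T$ is a complete first-order theory in a vocabulary with no function symbols, $P$ a unary predicate, $\mathcal{C}$ a monster model of $T$; all models are elementary submodels of $\mathcal{C}$ and all sets are subsets of $\mathcal{C}$. $P^A=A\cap P^{\mathcal{C}}$. Assumed throughout: $P$ is stably embedded (subsets of $P^{\mathcal{C}}$ definable with parameters in $\mathcal{C}$ are definable in $\mathcal{C}|_P$ with parameters from $P^{\mathcal{C}}$), $0$-definable subsets of $P^{\mathcal{C}}$ are $0$-definable in $\mathcal{C}|_P$, and $T$ has quantifier elimination. A set $A$ is complete if for every formula $\psi(\bar x,\bar y)$ and $\bar b\subseteq A$, $\models(\exists\bar x\in P)\psi(\bar x,\bar b)$ implies $\models\psi(\bar a,\bar b)$ for some $\bar a\subseteq P\cap A$. For complete $A$, $S_*(A)=\{\mathrm{tp}(\bar c/A): P\cap(A\cup\bar c)=P\cap A\text{ and }A\cup\bar c\text{ is complete}\}$. *)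

(* Defs.v *)
From Stdlib Require Import List Fin.
Import ListNotations.

(* A relational vocabulary (no function or constant symbols).
   The distinguished unary predicate P is built into the syntax (fP). *)
Record vocab := { rel : Type; arity : rel -> nat }.

Inductive form (L : vocab) (V : Type) : Type :=
| fTop : form L V
| fP : V -> form L V
| fEq : V -> V -> form L V
| fRel (r : rel L) : (Fin.t (arity L r) -> V) -> form L V
| fNot : form L V -> form L V
| fAnd : form L V -> form L V -> form L V
| fEx : form L (option V) -> form L V.

Arguments fTop {L V}.
Arguments fP {L V}.
Arguments fEq {L V}.
Arguments fRel {L V}.
Arguments fNot {L V}.
Arguments fAnd {L V}.
Arguments fEx {L V}.

Record structure (L : vocab) := {
  car : Type;
  Pint : car -> Prop;
  relI : forall r : rel L, (Fin.t (arity L r) -> car) -> Prop }.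

Arguments car {L}.
Arguments Pint {L}.
Arguments relI {L}.

Definition ext {T V : Type} (s : V -> T) (c : T) : option V -> T :=
  fun o => match o with Some v => s v | None => c end.

(* Satisfaction in C with quantifiers relativized to the subset D of C.
   For D = the universe this is satisfaction in C; for D = M (M a subset,
   hence a substructure since there are no function symbols) it is
   satisfaction in the substructure M; for D = P^C it is satisfaction in
   the induced structure C|_P. *)
Fixpoint sat_in {L : vocab} (C : structure L) (D : car C -> Prop)
  {V : Type} (s : V -> car C) (phi : form L V) {struct phi} : Prop :=
  match phi with
  | fTop => True
  | fP v => Pint C (s v)
  | fEq v w => s v = s w
  | fRel r a => relI C r (fun i => s (a i))
  | fNot psi => ~ sat_in C D s psi
  | fAnd psi chi => sat_in C D s psi /\ sat_in C D s chi
  | fEx psi => exists c, D c /\ sat_in C D (ext s c) psi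
  end.

Definition sat {L : vocab} (C : structure L) {V : Type} (s : V -> car C)
  (phi : form L V) : Prop := sat_in C (fun _ => True) s phi.

Fixpoint qf {L : vocab} {V : Type} (phi : form L V) : Prop :=
  match phi with
  | fNot psi => qf psi
  | fAnd psi chi => qf psi /\ qf chi
  | fEx _ => False
  | _ => True
  end.

Definition sum_asg {T X Y : Type} (f : X -> T) (g : Y -> T) : X + Y -> T :=
  fun v => match v with inl x => f x | inr y => g y end.

(* Cardinal comparison: |T| < lambda, lambda represented by a type Lam. *)
Definition card_le (T U : Type) : Prop :=
  exists f : T -> U, forall x y, f x = f y -> x = y.
Definition card_lt (T U : Type) : Prop := card_le T U /\ ~ card_le U T.

Section ModelTheory.
Context {L : vocab} (C : structure L).

Definition elementary (M : car C -> Prop) : Prop :=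
  forall (V : Type) (phi : form L V) (s : V -> car C),
    (forall v, M (s v)) -> (sat_in C M s phi <-> sat C s phi).

Definition saturated (Lam : Type) (M : car C -> Prop) : Prop :=
  forall B : car C -> Prop, (forall b, B b -> M b) -> card_lt (sig B) Lam ->
  forall q : form L (unit + sig B) -> Prop,
    (forall l : list (form L (unit + sig B)), (forall phi, In phi l -> q phi) ->
       exists m, M m /\ forall phi, In phi l ->
         sat_in C M (sum_asg (fun _ : unit => m) (@proj1_sig _ B)) phi) ->
    exists m, M m /\ forall phi, q phi ->
      sat_in C M (sum_asg (fun _ : unit => m) (@proj1_sig _ B)) phi.

Definition stably_embedded : Prop :=
  forall (n m : nat) (phi : form L (Fin.t n + Fin.t m)) (c : Fin.t m -> car C),
  exists (k : nat) (psi : form L (Fin.t n + Fin.t k)) (b : Fin.t k -> car C),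
    (forall j, Pint C (b j)) /\
    forall a : Fin.t n -> car C, (forall i, Pint C (a i)) ->
      (sat C (sum_asg a c) phi <-> sat_in C (Pint C) (sum_asg a b) psi).

Definition P_zero_definable : Prop :=
  forall (n : nat) (phi : form L (Fin.t n)),
  exists psi : form L (Fin.t n),
    forall a : Fin.t n -> car C, (forall i, Pint C (a i)) ->
      (sat C a phi <-> sat_in C (Pint C) a psi).

Definition has_QE : Prop :=
  forall (n : nat) (phi : form L (Fin.t n)),
  exists psi : form L (Fin.t n), qf psi /\
    forall a : Fin.t n -> car C, sat C a phi <-> sat C a psi.

Definition complete (A : car C -> Prop) : Prop :=
  forall (n m : nat) (psi : form L (Fin.t n + Fin.t m)) (b : Fin.t m -> car C),
    (forall j, A (b j)) ->
    (exists a : Fin.t n -> car C, (forall i, Pint C (a i)) /\ sat C (sum_asg a b) psi) ->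
    exists a : Fin.t n -> car C, (forall i, Pint C (a i) /\ A (a i)) /\
      sat C (sum_asg a b) psi.

Definition tp {X : Type} (c : X -> car C) (A : car C -> Prop)
  : form L (X + sig A) -> Prop :=
  fun phi => sat C (sum_asg c (@proj1_sig _ A)) phi.

Definition partial_type {X : Type} (A : car C -> Prop)
  (p : form L (X + sig A) -> Prop) : Prop :=
  forall l : list (form L (X + sig A)), (forall phi, In phi l -> p phi) ->
    exists c : X -> car C, forall phi, In phi l ->
      sat C (sum_asg c (@proj1_sig _ A)) phi.

Definition union_tuple {X : Type} (A : car C -> Prop) (c : X -> car C)
  : car C -> Prop := fun e => A e \/ exists x, c x = e.

Definition S_star (X : Type) (A : car C -> Prop)
  (q : form L (X + sig A) -> Prop) : Prop :=
  complete A /\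
  exists c : X -> car C,
    (forall phi, q phi <-> tp c A phi) /\
    (forall e, Pint C e -> (union_tuple A c e <-> A e)) /\
    complete (union_tuple A c).

End ModelTheory.

(* Main.v *)
Require Import Defs.
From mathcomp Require boolp classical_sets.
From Stdlib Require Import List Classical ClassicalEpsilon FunctionalExtensionality ProofIrrelevance Cantor PeanoNat.
Import ListNotations.

Lemma ZornP (T : Type) (R : T -> T -> Prop) :
  (forall t, R t t) -> (forall r s t, R r s -> R s t -> R r t) ->
  (forall s t, R s t -> R t s -> s = t) ->
  (forall A : T -> Prop, (forall s t, A s -> A t -> R s t \/ R t s) ->
     exists t, forall s, A s -> R s t) ->
  exists t, forall s, R t s -> s = t.
Proof.
  intros H1 H2 H3 H4.
  assert (E : forall a b, is_true (boolp.asbool (R a b)) <-> R a b).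
  { intros a b. rewrite boolp.asboolE. tauto. }
  destruct (@classical_sets.Zorn T (fun a b => boolp.asbool (R a b))) as [t Ht].
  - intros t; apply E; auto.
  - intros r s t a b; apply E; apply E in a; apply E in b; eauto.
  - intros s t a b; apply E in a; apply E in b; eauto.
  - intros A HA. destruct (H4 A) as [t Ht].
    + intros s t a b. destruct (HA s t a b) as [h|h]; [left|right]; apply E; exact h.
    + exists t; intros s a; apply E; auto.
  - exists t; intros s a; apply Ht, E, a.
Qed.

Definition oext {K W : Type} (f g : K -> option W) : Prop :=
  forall k w, f k = Some w -> g k = Some w.

Definition cub {K W : Type} (A : (K -> option W) -> Prop) : K -> option W :=
  fun k => match excluded_middle_informative
                   (exists w f, A f /\ f k = Some w) with
           | left H => Some (proj1_sig (constructive_indefinite_description _ H))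
           | right _ => None
           end.

Lemma cub_spec1 {K W} (A : (K -> option W) -> Prop) k w :
  cub A k = Some w -> exists f, A f /\ f k = Some w.
Proof.
  unfold cub. destruct excluded_middle_informative as [H|H]; [|discriminate].
  destruct (constructive_indefinite_description _ H) as [w' Hw']; simpl.
  intros E; injection E; intros; subst; exact Hw'.
Qed.

Lemma cub_spec2 {K W} (A : (K -> option W) -> Prop)
  (HA : forall f g, A f -> A g -> oext f g \/ oext g f) f :
  A f -> oext f (cub A).
Proof.
  intros Af k w Hk. unfold cub. destruct excluded_middle_informative as [H|H].
  - destruct (constructive_indefinite_description _ H) as [w' [g [Ag Hg]]]; simpl.
    destruct (HA f g Af Ag) as [E|E].
    + rewrite (E _ _ Hk) in Hg; congruence.
    + rewrite (E _ _ Hg) in Hk; congruence.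
  - exfalso; apply H; eauto.
Qed.

Lemma zorn_opt {K W : Type} (Good : (K -> option W) -> Prop) :
  (forall A, (forall f, A f -> Good f) ->
     (forall f g, A f -> A g -> oext f g \/ oext g f) -> Good (cub A)) ->
  exists f, Good f /\ forall g, Good g -> oext f g -> g = f.
Proof.
  intros HC.
  destruct (ZornP (sig Good) (fun a b => oext (proj1_sig a) (proj1_sig b))) as [t Ht].
  - intros t k w; auto.
  - intros r s t a b k w H; auto.
  - intros [s Hs] [t Htt] a b; simpl in *.
    assert (s = t).
    { apply functional_extensionality; intros k.
      destruct (s k) eqn:E1. { symmetry; apply a; auto. }
      destruct (t k) eqn:E2; auto. apply b in E2; congruence. }
    subst; f_equal; apply proof_irrelevance.
  - intros A HA.
    set (A' := fun f => exists t, A t /\ proj1_sig t = f).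
    assert (HA' : forall f g, A' f -> A' g -> oext f g \/ oext g f).
    { intros f g [s [As Es]] [t [At Et]]; subst; auto. }
    assert (G : Good (cub A')).
    { apply HC; auto. intros f [t [_ E]]; subst; exact (proj2_sig t). }
    exists (exist _ _ G); intros s As; simpl.
    apply cub_spec2; auto. exists s; auto.
  - exists (proj1_sig t); split; [exact (proj2_sig t)|].
    intros g Gg E. specialize (Ht (exist _ g Gg) E). rewrite <- Ht; reflexivity.
Qed.

Definition cid {A : Type} {P : A -> Prop} (H : exists x, P x) : A :=
  proj1_sig (constructive_indefinite_description P H).
Lemma cid_spec {A : Type} {P : A -> Prop} (H : exists x, P x) : P (cid H).
Proof. unfold cid; exact (proj2_sig _). Qed.

Lemma sig_eq {A : Type} {P : A -> Prop} (a b : sig P) : proj1_sig a = proj1_sig b -> a = b.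
Proof. destruct a, b; simpl; intros; subst; f_equal; apply proof_irrelevance. Qed.

Lemma card_le_trans A B D : card_le A B -> card_le B D -> card_le A D.
Proof.
  intros [f Hf] [g Hg]; exists (fun x => g (f x)); auto.
Qed.

Lemma card_cmp (U V : Type) : card_le U V \/ card_le V U.
Proof.
  destruct (@zorn_opt U V (fun f => forall u1 u2 v, f u1 = Some v -> f u2 = Some v -> u1 = u2))
    as [f [Gf Mf]].
  - intros A HG HA u1 u2 v H1 H2.
    apply cub_spec1 in H1; apply cub_spec1 in H2.
    destruct H1 as [f1 [A1 E1]], H2 as [f2 [A2 E2]].
    destruct (HA f1 f2 A1 A2) as [E|E].
    + apply E in E1; eauto.
    + apply E in E2; eauto.
  - destruct (classic (forall u, exists v, f u = Some v)) as [H|H].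
    + left. exists (fun u => cid (H u)). intros x y E.
      pose proof (cid_spec (H x)); pose proof (cid_spec (H y)).
      rewrite E in H0. eauto.
    + apply not_all_ex_not in H. destruct H as [u0 Hu0].
      assert (Hn : f u0 = None).
      { destruct (f u0) eqn:E; auto. exfalso; apply Hu0; eauto. }
      destruct (classic (forall v, exists u, f u = Some v)) as [H|H].
      * right. exists (fun v => cid (H v)). intros x y E.
        pose proof (cid_spec (H x)); pose proof (cid_spec (H y)).
        rewrite E in H0. congruence.
      * apply not_all_ex_not in H. destruct H as [v0 Hv0].
        set (f' := fun u => if excluded_middle_informative (u = u0) then Some v0 else f u).
        assert (E : f' = f).
        { apply Mf.
          - intros u1 u2 v. unfold f'.
            destruct excluded_middle_informative; destruct excluded_middle_informative;
              intros E1 E2; subst; auto.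
            + injection E1; intros; subst; exfalso; apply Hv0; eauto.
            + injection E2; intros; subst; exfalso; apply Hv0; eauto.
            + eauto.
          - intros k w Hk. unfold f'. destruct excluded_middle_informative; auto.
            subst; congruence. }
        assert (f' u0 = Some v0) by (unfold f'; destruct excluded_middle_informative; congruence).
        congruence.
Qed.

Lemma absorb (Q : Type) (j0 : nat -> Q) (Hj0 : forall x y, j0 x = j0 y -> x = y) :
  card_le (Q * nat) Q.
Proof.
  destruct (@zorn_opt Q (Q * nat) (fun h =>
     (forall s s' n, h s = Some (s', n) -> h s' <> None) /\
     (forall s1 s2 pr, h s1 = Some pr -> h s2 = Some pr -> s1 = s2) /\
     (forall s', h s' <> None -> forall n, exists s, h s = Some (s', n))))
    as [h [[Gi [Gii Giii]] Mh]].
  - intros A HG HA. split; [|split].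
    + intros s s' n H. apply cub_spec1 in H. destruct H as [f [Af Ef]].
      destruct (HG f Af) as [Hi _]. specialize (Hi _ _ _ Ef).
      destruct (f s') as [w|] eqn:E; [|congruence].
      rewrite (cub_spec2 A HA f Af _ _ E). discriminate.
    + intros s1 s2 pr H1 H2.
      apply cub_spec1 in H1; apply cub_spec1 in H2.
      destruct H1 as [f1 [A1 E1]], H2 as [f2 [A2 E2]].
      destruct (HA f1 f2 A1 A2) as [E|E].
      * apply E in E1. exact (proj1 (proj2 (HG f2 A2)) _ _ _ E1 E2).
      * apply E in E2. exact (proj1 (proj2 (HG f1 A1)) _ _ _ E1 E2).
    + intros s' H n. destruct (cub A s') as [w|] eqn:E; [|congruence].
      apply cub_spec1 in E. destruct E as [f [Af Ef]].
      destruct (proj2 (proj2 (HG f Af)) s' ltac:(congruence) n) as [s Hs].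
      exists s. apply (cub_spec2 A HA f Af _ _ Hs).
  - set (S := fun q => h q <> None).
    set (R := fun q => h q = None).
    assert (GS : forall (p : sig S * nat), exists s, h s = Some (proj1_sig (fst p), snd p)).
    { intros [[s' Hs'] n]; simpl. apply Giii; auto. }
    set (G := fun p : sig S * nat => cid (GS p)).
    assert (GSS : forall p, S (G p)).
    { intros p. unfold S, G. rewrite (cid_spec (GS p)). discriminate. }
    assert (Ginj : forall p1 p2, G p1 = G p2 -> p1 = p2).
    { intros [[a1 b1] c1] [[a2 b2] c2] E.
      pose proof (cid_spec (GS ((exist _ a1 b1), c1))).
      pose proof (cid_spec (GS ((exist _ a2 b2), c2))).
      unfold G in E. simpl in *. rewrite E in H. rewrite H in H0.
      injection H0; intros; subst. f_equal. f_equal. apply proof_irrelevance. }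
    destruct (card_cmp (sig R) (sig S)) as [[k Hk]|[k Hk]].
    +
      set (e := fun q : Q => match excluded_middle_informative (S q) with
                             | left H => (exist S q H, 0)
                             | right H => (k (exist R q (NNPP _ H)), 1) end).
      assert (einj : forall x y, e x = e y -> x = y).
      { intros x y. unfold e.
        destruct excluded_middle_informative as [Hx|Hx];
          destruct excluded_middle_informative as [Hy|Hy]; intros E.
        - apply (f_equal (fun p => proj1_sig (fst p))) in E; exact E.
        - apply (f_equal snd) in E; discriminate.
        - apply (f_equal snd) in E; discriminate.
        - apply (f_equal fst) in E. apply Hk in E.
          apply (f_equal (@proj1_sig _ _)) in E; exact E. }
      exists (fun qn => G (fst (e (fst qn)), to_nat (snd (e (fst qn)), snd qn))).
      intros [x n] [y m] E. cbn [fst snd] in E.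
      apply Ginj in E. pose proof (f_equal fst E) as E2; pose proof (f_equal snd E) as E1.
      cbn [fst snd] in E1, E2.
      apply (f_equal of_nat) in E1. rewrite !cancel_of_to in E1. injection E1; intros; subst.
      assert (Exy : e x = e y) by (destruct (e x), (e y); simpl in *; subst; auto).
      apply einj in Exy; subst; auto.
    +
      assert (Hj : exists j : nat -> sig R, forall x y, j x = j y -> x = y).
      { destruct (classic (exists s, S s)) as [[s Hs]|Hn].
        - exists (fun n => k (exist S (G (exist S s Hs, n)) (GSS _))).
          intros x y E. apply Hk in E. apply (f_equal (@proj1_sig _ _)) in E.
          apply Ginj in E. apply (f_equal snd) in E; exact E.
        - assert (HR : forall q, R q).
          { intros q; unfold R. destruct (h q) eqn:E; auto. exfalso; apply Hn; exists q; unfold S; congruence. }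
          exists (fun n => exist R (j0 n) (HR _)). intros x y E. apply Hj0.
          injection E; auto. }
      destruct Hj as [j Hj].
      set (jr := fun n => proj1_sig (j n)).
      assert (jrinj : forall x y, jr x = jr y -> x = y).
      { intros x y E; apply Hj, sig_eq, E. }
      assert (jrR : forall m, h (jr m) = None) by (intros m; exact (proj2_sig (j m))).
      set (jinv := fun q => match excluded_middle_informative (exists m, jr m = q) with
                            | left H => cid H | right _ => 0 end).
      assert (jinvK : forall m, jinv (jr m) = m).
      { intros m; unfold jinv; destruct excluded_middle_informative as [H|H].
        - apply jrinj; exact (cid_spec H).
        - exfalso; eauto. }
      set (h' := fun q => match h q with
                          | Some pr => Some pr
                          | None => if excluded_middle_informative (exists m, jr m = q)
                                    then Some (jr (fst (of_nat (jinv q))), snd (of_nat (jinv q)))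
                                    else None end).
      assert (h'new : forall m, h' (jr m) = Some (jr (fst (of_nat m)), snd (of_nat m))).
      { intros m; unfold h'; rewrite jrR. destruct excluded_middle_informative as [H|H].
        - rewrite jinvK; auto.
        - exfalso; eauto. }
      assert (hext : oext h h') by (intros q w Hq; unfold h'; rewrite Hq; auto).
      assert (h'inv : forall q w, h' q = Some w -> h q = Some w \/
                 exists m, q = jr m /\ w = (jr (fst (of_nat m)), snd (of_nat m))).
      { intros q w. unfold h'. destruct (h q) eqn:E; [left; congruence|].
        destruct excluded_middle_informative as [Hm|Hm]; [|discriminate].
        destruct Hm as [m Hm]; subst q. rewrite jinvK. intros Ew; injection Ew; intros; subst.
        right; eauto. }
      assert (Good' : h' = h).
      { apply Mh; [|exact hext]. split; [|split].
        - intros s0 s' n H. apply h'inv in H. destruct H as [H|[m [E1 E2]]].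
          + apply Gi in H. destruct (h s') eqn:E; [|congruence].
            rewrite (hext _ _ E); discriminate.
          + injection E2; intros; subst. rewrite h'new; discriminate.
        - intros s1 s2 pr H1 H2. apply h'inv in H1; apply h'inv in H2.
          destruct H1 as [H1|[m1 [E1 F1]]]; destruct H2 as [H2|[m2 [E2 F2]]].
          + eauto.
          + subst pr. apply Gi in H1. exfalso; apply H1, jrR.
          + subst pr. apply Gi in H2. exfalso; apply H2, jrR.
          + rewrite F1 in F2. subst s1 s2. injection F2; intros Fb Fa.
            apply jrinj in Fa.
            assert (Eo : of_nat m1 = of_nat m2).
            { destruct (of_nat m1), (of_nat m2); simpl in *; subst; auto. }
            rewrite <- (cancel_to_of m1), <- (cancel_to_of m2), Eo; auto.
        - intros s' H n. destruct (h s') as [w|] eqn:E.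
          + destruct (Giii s' ltac:(congruence) n) as [s0 Hs0]. exists s0; apply hext; auto.
          + destruct (h' s') as [w|] eqn:E'; [|congruence].
            apply h'inv in E'. destruct E' as [E'|[m [E1 _]]]; [congruence|].
            exists (jr (to_nat (m, n))). rewrite h'new, cancel_of_to. simpl. subst; auto. }
      pose proof (h'new 0) as H0. rewrite Good', jrR in H0. discriminate.
Qed.

Lemma card_main (X Pi Lam : Type) (j : nat -> Pi) (Hj : forall x y, j x = j y -> x = y) :
  card_lt X Lam -> card_lt Pi Lam -> ~ card_le Lam (X + Pi * nat).
Proof.
  intros [_ HX] [_ HP] HL.
  pose proof (absorb Pi j Hj) as [a Ha].
  assert (HL2 : card_le Lam (X + Pi)).
  { eapply card_le_trans; [exact HL|].
    exists (fun v => match v with inl x => inl x | inr y => inr (a y) end).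
    intros [x|x] [y|y] E; try discriminate; injection E as E'.
    + subst; auto.
    + apply Ha in E'; subst; auto. }
  destruct (card_cmp X Pi) as [[b Hb]|[b Hb]].
  - apply HP. eapply card_le_trans; [exact HL2|].
    exists (fun v => a (match v with inl x => (b x, 0) | inr y => (y, 1) end)).
    intros [x|x] [y|y] E; apply Ha in E.
    + apply (f_equal fst) in E; simpl in E; apply Hb in E; subst; reflexivity.
    + apply (f_equal snd) in E; discriminate.
    + apply (f_equal snd) in E; discriminate.
    + apply (f_equal fst) in E; simpl in E; subst; reflexivity.
  - assert (Hbj : forall x y, b (j x) = b (j y) -> x = y) by (intros x y E; apply Hj, Hb, E).
    pose proof (absorb X (fun n => b (j n)) Hbj) as [a' Ha'].
    apply HX. eapply card_le_trans; [exact HL2|].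
    exists (fun v => a' (match v with inl x => (x, 0) | inr y => (b y, 1) end)).
    intros [x|x] [y|y] E; apply Ha' in E.
    + apply (f_equal fst) in E; simpl in E; subst; reflexivity.
    + apply (f_equal snd) in E; discriminate.
    + apply (f_equal snd) in E; discriminate.
    + apply (f_equal fst) in E; simpl in E; apply Hb in E; subst; reflexivity.
Qed.

Section Syn.
Context {L : vocab} (C : structure L).

Fixpoint map_form {V W : Type} (f : V -> W) (phi : form L V) : form L W :=
  match phi with
  | fTop => fTop
  | fP v => fP (f v)
  | fEq v w => fEq (f v) (f w)
  | fRel r a => fRel r (fun i => f (a i))
  | fNot psi => fNot (map_form f psi)
  | fAnd psi chi => fAnd (map_form f psi) (map_form f chi)
  | fEx psi => fEx (map_form (option_map f) psi)
  end.

Lemma sat_map {V : Type} (phi : form L V) : forall {W : Type} (f : V -> W) D (s : W -> car C),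
  sat_in C D s (map_form f phi) <-> sat_in C D (fun v => s (f v)) phi.
Proof.
  induction phi; intros W f D s; cbn [map_form sat_in]; try tauto.
  - rewrite IHphi; tauto.
  - rewrite IHphi1, IHphi2; tauto.
  - split; intros [c [Dc H]]; exists c; split; auto.
    + rewrite IHphi in H.
      replace (fun v => ext s c (option_map f v)) with (ext (fun v => s (f v)) c) in H; auto.
      apply functional_extensionality; intros [v|]; reflexivity.
    + rewrite IHphi.
      replace (fun v => ext s c (option_map f v)) with (ext (fun v => s (f v)) c); auto.
      apply functional_extensionality; intros [v|]; reflexivity.
Qed.

Fixpoint fin_enum (n : nat) : list (Fin.t n) :=
  match n with 0 => [] | S n' => Fin.F1 :: map Fin.FS (fin_enum n') end.

Lemma fin_enum_in n (i : Fin.t n) : In i (fin_enum n).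
Proof.
  induction i; simpl; auto. right; apply in_map; auto.
Qed.

Definition opt_list {V : Type} (o : option V) : list V :=
  match o with Some v => [v] | None => [] end.

Fixpoint fvs {V : Type} (phi : form L V) : list V :=
  match phi with
  | fTop => []
  | fP v => [v]
  | fEq v w => [v; w]
  | fRel r a => map a (fin_enum (arity L r))
  | fNot psi => fvs psi
  | fAnd psi chi => fvs psi ++ fvs chi
  | fEx psi => flat_map opt_list (fvs psi)
  end.

Lemma sat_fv {V : Type} (phi : form L V) : forall D (s s' : V -> car C),
  (forall v, In v (fvs phi) -> s v = s' v) ->
  (sat_in C D s phi <-> sat_in C D s' phi).
Proof.
  induction phi; intros D s s' H; simpl in *.
  - tauto.
  - rewrite H; auto. tauto.
  - rewrite (H v), (H v0); auto. tauto.
  - match goal with |- relI C _ ?F <-> relI C _ ?G => replace G with F; [tauto|] end.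
    apply functional_extensionality; intros i. apply H, in_map, fin_enum_in.
  - rewrite (IHphi D s s' H); tauto.
  - rewrite (IHphi1 D s s'), (IHphi2 D s s'); [tauto| |];
      intros v Hv; apply H, in_or_app; auto.
  - assert (HE : forall c, forall v, In v (fvs phi) -> ext s c v = ext s' c v).
    { intros c [v|] Hv; simpl; auto. apply H, in_flat_map. exists (Some v); simpl; auto. }
    split; intros [c [Dc Hc]]; exists c; split; auto.
    + exact (proj1 (IHphi D (ext s c) (ext s' c) (HE c)) Hc).
    + exact (proj2 (IHphi D (ext s c) (ext s' c) (HE c)) Hc).
Qed.

Lemma sat_ext {V : Type} (phi : form L V) D (s s' : V -> car C) :
  (forall v, s v = s' v) -> (sat_in C D s phi <-> sat_in C D s' phi).
Proof. intros H; apply sat_fv; auto. Qed.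

Definition shiftk {V : Type} (k : nat) (x : V + Fin.t (S k)) : option (V + Fin.t k) :=
  match x with
  | inl v => Some (inl v)
  | inr i => Fin.caseS' i (fun _ => option (V + Fin.t k)) None (fun i' => Some (inr i'))
  end.

Definition drop0 {V : Type} (x : V + Fin.t 0) : V :=
  match x with inl v => v | inr i => Fin.case0 (fun _ => V) i end.

Fixpoint exn {V : Type} (k : nat) : form L (V + Fin.t k) -> form L V :=
  match k with
  | 0 => fun phi => map_form drop0 phi
  | S k' => fun phi => exn k' (fEx (map_form (shiftk k') phi))
  end.

Lemma sat_exn (k : nat) : forall {V : Type} (phi : form L (V + Fin.t k)) D (s : V -> car C),
  sat_in C D s (exn k phi) <->
  exists e : Fin.t k -> car C, (forall i, D (e i)) /\ sat_in C D (sum_asg s e) phi.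
Proof.
  induction k; intros V phi D s; simpl.
  - rewrite sat_map. split.
    + intros H. exists (fun i => Fin.case0 _ i). split; [intros i; apply Fin.case0 with (p := i)|].
      revert H; apply sat_ext. intros [v|i]; [reflexivity| apply Fin.case0 with (p := i)].
    + intros [e [_ H]]. revert H; apply sat_ext. intros [v|i]; [reflexivity| apply Fin.case0 with (p := i)].
  - rewrite IHk. split.
    + intros [e' [De' [c [Dc H]]]]. rewrite sat_map in H.
      exists (fun i => Fin.caseS' i (fun _ => car C) c e'). split.
      * intros i. pattern i; apply Fin.caseS'; simpl; auto.
      * revert H; apply sat_ext. intros [v|i]; [reflexivity|].
        pattern i; apply Fin.caseS'; reflexivity.
    + intros [e [De H]]. exists (fun i => e (Fin.FS i)). split; [auto|].
      exists (e Fin.F1). split; auto. rewrite sat_map.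
      revert H; apply sat_ext. intros [v|i]; [reflexivity|].
      pattern i; apply Fin.caseS'; reflexivity.
Qed.

Fixpoint bigAnd {V : Type} (l : list (form L V)) : form L V :=
  match l with [] => fTop | phi :: l' => fAnd phi (bigAnd l') end.

Lemma sat_bigAnd {V : Type} (l : list (form L V)) D s :
  sat_in C D s (bigAnd l) <-> forall phi, In phi l -> sat_in C D s phi.
Proof.
  induction l; simpl.
  - split; auto. intros _ phi [].
  - rewrite IHl. split.
    + intros [H1 H2] phi [E|E]; subst; auto.
    + intros H; split; auto.
Qed.

Lemma fvs_bigAnd {V : Type} (l : list (form L V)) v :
  In v (fvs (bigAnd l)) -> exists phi, In phi l /\ In v (fvs phi).
Proof.
  induction l; simpl; [tauto|]. intros H. apply in_app_or in H. destruct H as [H|H]; eauto.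
  destruct (IHl H) as [phi [H1 H2]]; eauto.
Qed.

End Syn.

Section Main.
Context {L : vocab} (C : structure L) (M : car C -> Prop) (HM : elementary C M).

Definition swapnm {n m : nat} (u : Fin.t n + Fin.t m) : Fin.t m + Fin.t n :=
  match u with inl i => inr i | inr j => inl j end.

Lemma complete_of (A' : car C -> Prop) (H1 : forall e, Pint C e -> M e -> A' e)
  (H2 : forall e, A' e -> M e) : complete C A'.
Proof.
  intros n m psi b Hb [a [Pa Hs]].
  set (Phi := map_form swapnm (fAnd (bigAnd (map (fun i => @fP L _ (inl i)) (fin_enum n))) psi)
          : form L (Fin.t m + Fin.t n)).
  assert (Hb' : forall j, M (b j)) by (intros j; apply H2, Hb).
  assert (HC : sat C b (exn n Phi)).
  { unfold sat. apply sat_exn. exists a. split; [auto|].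
    unfold Phi. rewrite sat_map. cbn [sat_in]. split.
    - apply sat_bigAnd. intros phi Hphi. apply in_map_iff in Hphi.
      destruct Hphi as [i [E _]]; subst. simpl. apply Pa.
    - revert Hs. apply sat_ext. intros [i|j]; reflexivity. }
  apply (HM _ _ _ Hb') in HC. apply sat_exn in HC.
  destruct HC as [e [Me He]]. unfold Phi in He. rewrite sat_map in He.
  cbn [sat_in] in He. destruct He as [HP Hpsi].
  assert (Pe : forall i, Pint C (e i)).
  { intros i. rewrite sat_bigAnd in HP.
    apply (HP (fP (inl i))). apply in_map_iff. exists i; split; auto. apply fin_enum_in. }
  exists e. split.
  - intros i; split; auto.
  - assert (Hpsi' : sat_in C M (sum_asg e b) psi).
    { revert Hpsi; apply sat_ext. intros [i|j]; reflexivity. }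
    apply HM in Hpsi'; auto. intros [i|j]; simpl; auto.
Qed.

Lemma realize_in_M (B : car C -> Prop) (HB : forall e, B e -> M e)
  (Ls : list (form L (unit + sig B))) :
  (exists c0, forall psi, In psi Ls -> sat C (sum_asg (fun _ : unit => c0) (@proj1_sig _ B)) psi) ->
  exists m, M m /\ forall psi, In psi Ls -> sat C (sum_asg (fun _ : unit => m) (@proj1_sig _ B)) psi.
Proof.
  intros [c0 Hc0].
  set (g := fun u : unit + sig B => match u with inl _ => None | inr b => Some b end).
  set (Phi := fEx (map_form g (bigAnd Ls))).
  assert (HMB : forall b : sig B, M (proj1_sig b)) by (intros [b Hb]; simpl; auto).
  assert (H : sat C (@proj1_sig _ B) Phi).
  { unfold sat, Phi. cbn [sat_in]. exists c0. split; auto. rewrite sat_map.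
    apply sat_bigAnd. intros psi Hpsi. specialize (Hc0 psi Hpsi). revert Hc0.
    apply sat_ext. intros [[]|b]; reflexivity. }
  apply HM in H; auto. unfold Phi in H. cbn [sat_in] in H.
  destruct H as [m [Mm Hm]]. rewrite sat_map in Hm.
  exists m. split; auto. intros psi Hpsi.
  assert (Hm' : sat_in C M (sum_asg (fun _ : unit => m) (@proj1_sig _ B)) (bigAnd Ls)).
  { revert Hm; apply sat_ext. intros [[]|b]; reflexivity. }
  assert (HMv : forall v, M (sum_asg (fun _ : unit => m) (@proj1_sig _ B) v))
    by (intros [[]|b]; simpl; auto).
  pose proof (proj1 (HM _ _ _ HMv) Hm') as Hm''.
  unfold sat in Hm''. rewrite sat_bigAnd in Hm''. unfold sat; apply Hm''; auto.
Qed.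


Fixpoint lnth {T : Type} (l : list T) : Fin.t (length l) -> T :=
  match l with
  | [] => fun i => Fin.case0 (fun _ => T) i
  | a :: l' => fun i => Fin.caseS' i (fun _ => T) a (lnth l')
  end.

Lemma lnth_in {T : Type} (l : list T) z : In z l -> exists i, lnth l i = z.
Proof.
  induction l as [|a l IH]; simpl; [tauto|]. intros [E|H].
  - exists Fin.F1; simpl; auto.
  - destruct (IH H) as [i Hi]. exists (Fin.FS i). simpl. auto.
Qed.

Context (Lam : Type) (Hsat : saturated C Lam M) (A : car C -> Prop)
  (HPA : forall e, Pint C e -> M e -> A e) (HAM : forall e, A e -> M e)
  (X : Type) (HX : card_lt X Lam)
  (p : form L (X + sig A) -> Prop) (Hp : partial_type C A p)
  (Hcard : card_lt (sig p) Lam).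

Definition Good (t : X -> option (car C)) : Prop :=
  (forall z v, t z = Some v -> M v) /\
  forall l, (forall phi, In phi l -> p phi) ->
    exists d : X -> car C, (forall phi, In phi l -> sat C (sum_asg d (@proj1_sig _ A)) phi) /\
      (forall phi z v, In phi l -> In (inl z) (fvs phi) -> t z = Some v -> d z = v).

Definition xl (u : X + sig A) : list X := match u with inl z => [z] | inr _ => [] end.
Definition xv (l : list (form L (X + sig A))) : list X := flat_map (fun phi => flat_map xl (fvs phi)) l.

Lemma xv_in l phi z : In phi l -> In (inl z) (fvs phi) -> In z (xv l).
Proof.
  intros H1 H2. unfold xv. apply in_flat_map. exists phi. split; auto.
  apply in_flat_map. exists (inl z). simpl; auto.
Qed.

Lemma good_bot : Good (fun _ => None).
Proof.
  split; [intros; discriminate|]. intros l Hl. destruct (Hp l Hl) as [c Hc].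
  exists c. split; auto. intros; discriminate.
Qed.

Lemma good_chain (Ach : (X -> option (car C)) -> Prop) :
  (forall f, Ach f -> Good f) -> (forall f g, Ach f -> Ach g -> oext f g \/ oext g f) ->
  Good (cub Ach).
Proof.
  intros HG HA.
  assert (Cov : forall zs, exists t, (t = (fun _ => None) \/ Ach t) /\
     forall z v, In z zs -> cub Ach z = Some v -> t z = Some v).
  { induction zs as [|z zs IH].
    - exists (fun _ => None). split; auto. intros z v [].
    - destruct IH as [t [Ht Hc]].
      destruct (cub Ach z) as [v|] eqn:Ez.
      + destruct (cub_spec1 _ _ _ Ez) as [f [Af Ef]].
        destruct Ht as [Ht|Ht].
        * exists f. split; auto. intros z' v' [E|H] E'.
          -- subst; congruence.
          -- specialize (Hc z' v' H E'). subst t; discriminate.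
        * destruct (HA t f Ht Af) as [E|E].
          -- exists f. split; auto. intros z' v' [E1|H] E'.
             ++ subst; congruence.
             ++ apply E; auto.
          -- exists t. split; auto. intros z' v' [E1|H] E'.
             ++ subst. apply E. congruence.
             ++ auto.
      + exists t. split; auto. intros z' v' [E1|H] E'; [subst; congruence|auto]. }
  split.
  - intros z v E. destruct (cub_spec1 _ _ _ E) as [f [Af Ef]]. exact (proj1 (HG f Af) z v Ef).
  - intros l Hl. destruct (Cov (xv l)) as [t [Ht Hc]].
    assert (Gt : Good t) by (destruct Ht as [Ht|Ht]; [subst; apply good_bot|auto]).
    destruct (proj2 Gt l Hl) as [d [Hd1 Hd2]]. exists d. split; auto.
    intros phi z v H1 H2 H3. apply (Hd2 phi); auto. apply Hc; auto. eapply xv_in; eauto.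
Qed.

Section Step.
Context (t : X -> option (car C)) (x : X) (Htx : t x = None).

Definition Bset : car C -> Prop := fun e => (exists z, t z = Some e) \/
  (exists phi a, p phi /\ In (inr a) (fvs phi) /\ proj1_sig a = e).

Definition sigma (zs : list X) (u : X + sig A) : (unit + sig Bset) + Fin.t (length zs) :=
  match u with
  | inl z => if excluded_middle_informative (z = x) then inl (inl tt) else
      match t z with
      | Some v => match excluded_middle_informative (Bset v) with
                  | left H => inl (inr (exist _ v H)) | right _ => inl (inl tt) end
      | None => match excluded_middle_informative (exists i, lnth zs i = z) with
                | left H => inr (cid H) | right _ => inl (inl tt) end
      end
  | inr a => match excluded_middle_informative (Bset (proj1_sig a)) with
             | left H => inl (inr (exist _ _ H)) | right _ => inl (inl tt) end
  end.

Definition psi (l : list (form L (X + sig A))) : form L (unit + sig Bset) :=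
  exn (length (xv l)) (bigAnd (map (map_form (sigma (xv l))) l)).

Definition SS (zs : list X) (m : car C) (e : Fin.t (length zs) -> car C) :=
  sum_asg (sum_asg (fun _ : unit => m) (@proj1_sig _ Bset)) e.

Lemma sig_x zs m e : SS zs m e (sigma zs (inl x)) = m.
Proof. unfold sigma. destruct excluded_middle_informative; [reflexivity|congruence]. Qed.

Lemma sig_Y zs m e z v : t z = Some v -> SS zs m e (sigma zs (inl z)) = v.
Proof.
  intros E. unfold sigma. destruct excluded_middle_informative; [subst; congruence|].
  rewrite E. destruct excluded_middle_informative as [H|H]; [reflexivity|].
  exfalso; apply H; left; eauto.
Qed.

Lemma sig_Z zs m (d : X -> car C) z : t z = None -> z <> x -> In z zs ->
  SS zs m (fun i => d (lnth zs i)) (sigma zs (inl z)) = d z.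
Proof.
  intros E1 E2 E3. unfold sigma. destruct excluded_middle_informative; [congruence|].
  rewrite E1. destruct excluded_middle_informative as [H|H].
  - simpl. f_equal. exact (cid_spec H).
  - exfalso; apply H, lnth_in, E3.
Qed.

Lemma sig_A zs m e phi a : p phi -> In (inr a) (fvs phi) ->
  SS zs m e (sigma zs (inr a)) = proj1_sig a.
Proof.
  intros H1 H2. unfold sigma. destruct excluded_middle_informative as [H|H]; [reflexivity|].
  exfalso; apply H; right; eauto.
Qed.

Lemma psi_fwd l m : (forall phi, In phi l -> p phi) ->
  sat C (sum_asg (fun _ : unit => m) (@proj1_sig _ Bset)) (psi l) ->
  exists d : X -> car C, d x = m /\ (forall z v, t z = Some v -> d z = v) /\
    forall phi, In phi l -> sat C (sum_asg d (@proj1_sig _ A)) phi.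
Proof.
  intros Hl H. unfold psi, sat in H. rewrite sat_exn in H. destruct H as [e [_ He]].
  rewrite sat_bigAnd in He.
  exists (fun z => SS (xv l) m e (sigma (xv l) (inl z))). split; [|split].
  - apply sig_x.
  - intros z v E. apply sig_Y; auto.
  - intros phi Hphi. specialize (He (map_form (sigma (xv l)) phi) (in_map _ _ _ Hphi)).
    rewrite sat_map in He. unfold sat. revert He. apply sat_fv.
    intros [z|a] Ha; [reflexivity|]. symmetry. unfold SS. simpl.
    apply (sig_A (xv l) m e phi a (Hl _ Hphi) Ha).
Qed.

Lemma psi_bwd l m (d : X -> car C) : (forall phi, In phi l -> p phi) ->
  d x = m -> (forall phi z v, In phi l -> In (inl z) (fvs phi) -> t z = Some v -> d z = v) ->
  (forall phi, In phi l -> sat C (sum_asg d (@proj1_sig _ A)) phi) ->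
  sat C (sum_asg (fun _ : unit => m) (@proj1_sig _ Bset)) (psi l).
Proof.
  intros Hl Hdx Hdt Hd. unfold psi, sat. rewrite sat_exn.
  exists (fun i => d (lnth (xv l) i)). split; [auto|].
  rewrite sat_bigAnd. intros phi' Hphi'. apply in_map_iff in Hphi'.
  destruct Hphi' as [phi [E Hphi]]; subst phi'. rewrite sat_map.
  specialize (Hd phi Hphi). revert Hd. apply sat_fv.
  intros [z|a] Hz.
  - change (SS (xv l) m (fun i => d (lnth (xv l) i)) (sigma (xv l) (inl z)) = d z).
    destruct (classic (z = x)) as [Ez|Ez].
    + subst. rewrite sig_x; auto.
    + destruct (t z) as [v|] eqn:Et.
      * rewrite (sig_Y _ _ _ _ _ Et). symmetry. eapply Hdt; eauto.
      * rewrite sig_Z; auto. eapply xv_in; eauto.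
  - change (SS (xv l) m (fun i => d (lnth (xv l) i)) (sigma (xv l) (inr a)) = proj1_sig a).
    rewrite (sig_A _ _ _ phi a); auto.
Qed.

End Step.


Lemma good_ext t x m (Gt : Good t) (Mm : M m)
  (Hm : forall l, (forall phi, In phi l -> p phi) -> exists d : X -> car C, d x = m /\
     (forall z v, t z = Some v -> d z = v) /\
     forall phi, In phi l -> sat C (sum_asg d (@proj1_sig _ A)) phi) :
  Good (fun z => if excluded_middle_informative (z = x) then Some m else t z).
Proof.
  split.
  - intros z v. destruct excluded_middle_informative as [E|E].
    + intros H; injection H; intros; subst; auto.
    + apply (proj1 Gt).
  - intros l Hl. destruct (Hm l Hl) as [d [E1 [E2 E3]]]. exists d. split; auto.
    intros phi z v _ _. destruct excluded_middle_informative as [E|E].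
    + intros H; injection H; intros; subst; auto.
    + apply E2.
Qed.

Lemma inf_inj (Hinf : ~ exists lp, (forall phi, In phi lp -> p phi) /\ forall phi, p phi -> In phi lp) :
  exists j : nat -> sig p, forall a b, j a = j b -> a = b.
Proof.
  assert (Hnew : forall l : list (sig p), exists q, ~ In q l).
  { intros l. apply NNPP; intros Hn. apply Hinf. exists (map (@proj1_sig _ _) l). split.
    - intros phi Hphi. apply in_map_iff in Hphi. destruct Hphi as [[q Hq] [E _]]; simpl in E; subst; auto.
    - intros phi Hphi. apply in_map_iff. exists (exist _ phi Hphi). split; auto.
      apply NNPP; intros Hn'. apply Hn. exists (exist _ phi Hphi); auto. }
  set (g := nat_rect (fun _ => list (sig p)) [] (fun _ l => cid (Hnew l) :: l)).
  set (f := fun n => cid (Hnew (g n))).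
  assert (Hg : forall n, g (S n) = f n :: g n) by reflexivity.
  assert (Hin : forall k n, In (f n) (g (S k + n))).
  { induction k; intros n; simpl.
    - left; reflexivity.
    - right. apply (IHk n). }
  exists f. intros a b E.
  destruct (Nat.lt_total a b) as [H|[H|H]]; auto; exfalso.
  - destruct (Nat.le_exists_sub (S a) b H) as [k [Ek _]].
    pose proof (Hin k a) as H1. replace (S k + a) with b in H1 by (subst; simpl; rewrite Nat.add_succ_r; reflexivity).
    rewrite E in H1. exact (cid_spec (Hnew (g b)) H1).
  - destruct (Nat.le_exists_sub (S b) a H) as [k [Ek _]].
    pose proof (Hin k b) as H1. replace (S k + b) with a in H1 by (subst; simpl; rewrite Nat.add_succ_r; reflexivity).
    rewrite <- E in H1. exact (cid_spec (Hnew (g a)) H1).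
Qed.

Lemma encode_B t : card_le (sig (Bset t)) (X + sig p * nat).
Proof.
  assert (H2 : forall b : sig (Bset t), ~ (exists z, t z = Some (proj1_sig b)) ->
     exists pr : sig p * nat, exists a, nth_error (fvs (proj1_sig (fst pr))) (snd pr) = Some (inr a)
        /\ proj1_sig a = proj1_sig b).
  { intros [e [H|[phi [a [Hphi [Ha Ea]]]]]] Hn; simpl in *; [contradiction|].
    destruct (In_nth_error _ _ Ha) as [n Hn'].
    exists (exist _ phi Hphi, n), a. simpl; auto. }
  exists (fun b => match excluded_middle_informative (exists z, t z = Some (proj1_sig b)) with
                   | left H => inl (cid H) | right H => inr (cid (H2 b H)) end).
  intros b1 b2.
  destruct excluded_middle_informative as [H|H]; destruct excluded_middle_informative as [H'|H'];
    intros E; try discriminate.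
  - injection E as E. pose proof (cid_spec H) as S1. pose proof (cid_spec H') as S2.
    apply sig_eq. simpl in *. congruence.
  - injection E as E. pose proof (cid_spec (H2 b1 H)) as S1. pose proof (cid_spec (H2 b2 H')) as S2.
    rewrite E in S1. destruct S1 as [a1 [N1 E1]], S2 as [a2 [N2 E2]].
    rewrite N1 in N2. injection N2 as N2. subst. apply sig_eq; congruence.
Qed.

Lemma step t (Gt : Good t) x (Htx : t x = None) :
  exists m, M m /\ forall l, (forall phi, In phi l -> p phi) -> exists d : X -> car C, d x = m /\
     (forall z v, t z = Some v -> d z = v) /\
     forall phi, In phi l -> sat C (sum_asg d (@proj1_sig _ A)) phi.
Proof.
  assert (HB : forall e, Bset t e -> M e).
  { intros e [[z Hz]|[phi [a [_ [_ Ea]]]]].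
    - exact (proj1 Gt z e Hz).
    - subst; apply HAM, (proj2_sig a). }
  assert (HMv : forall m, M m -> forall v, M (sum_asg (fun _ : unit => m) (@proj1_sig _ (Bset t)) v)).
  { intros m Mm [[]|[b Hb]]; simpl; auto. }
  destruct (classic (exists lp, (forall phi, In phi lp -> p phi) /\ forall phi, p phi -> In phi lp))
    as [[lp [Hlp1 Hlp2]]|Hinf].
  - destruct (proj2 Gt lp Hlp1) as [d [Hd1 Hd2]].
    assert (Hs : sat C (sum_asg (fun _ : unit => d x) (@proj1_sig _ (Bset t))) (psi t x lp)).
    { apply (psi_bwd t x Htx _ (d x) d); auto. }
    destruct (realize_in_M (Bset t) HB [psi t x lp]) as [m [Mm Hm]].
    { exists (d x). intros psi0 [E|[]]; subst; auto. }
    exists m. split; auto. intros l Hl.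
    destruct (psi_fwd t x Htx lp m Hlp1 (Hm _ (or_introl eq_refl))) as [d' [E1 [E2 E3]]].
    exists d'. repeat split; auto.
  - destruct (inf_inj Hinf) as [j Hj].
    assert (Hlt : card_lt (sig (Bset t)) Lam).
    { assert (Hn : ~ card_le Lam (sig (Bset t))).
      { intros H. apply (card_main X (sig p) Lam j Hj HX Hcard).
        eapply card_le_trans; [exact H|apply encode_B]. }
      split; auto. destruct (card_cmp (sig (Bset t)) Lam); auto; contradiction. }
    set (q := fun psi0 => exists l, (forall phi, In phi l -> p phi) /\ psi0 = psi t x l).
    destruct (Hsat (Bset t) HB Hlt q) as [m [Mm Hm]].
    + intros Ls HLs.
      assert (Comb : exists lall, (forall phi, In phi lall -> p phi) /\
         forall psi0, In psi0 Ls -> exists l, (forall phi, In phi l -> p phi) /\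
            (forall phi, In phi l -> In phi lall) /\ psi0 = psi t x l).
      { clear - HLs. induction Ls as [|ps Ls IH].
        - exists []. split; [intros _ []|intros _ []].
        - destruct IH as [lall [H1 H2]]; [intros; apply HLs; simpl; auto|].
          destruct (HLs ps (or_introl eq_refl)) as [l [Hl E]].
          exists (l ++ lall). split.
          + intros phi Hphi. apply in_app_or in Hphi. destruct Hphi; auto.
          + intros psi0 [E'|H'].
            * subst. exists l. repeat split; auto. intros; apply in_or_app; auto.
            * destruct (H2 psi0 H') as [l' [A1 [A2 A3]]]. exists l'. repeat split; auto.
              intros; apply in_or_app; auto. }
      destruct Comb as [lall [Hall1 Hall2]].
      destruct (proj2 Gt lall Hall1) as [d [Hd1 Hd2]].
      destruct (realize_in_M (Bset t) HB Ls) as [m [Mm Hm]].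
      { exists (d x). intros psi0 Hpsi0. destruct (Hall2 psi0 Hpsi0) as [l [A1 [A2 A3]]]. subst.
        apply (psi_bwd t x Htx _ (d x) d); auto. intros phi z v H1 H2 H3; eapply Hd2; eauto. }
      exists m. split; auto. intros psi0 Hpsi0. apply (HM _ _ _ (HMv m Mm)). apply Hm; auto.
    + exists m. split; auto. intros l Hl.
      assert (Hs : sat C (sum_asg (fun _ : unit => m) (@proj1_sig _ (Bset t))) (psi t x l)).
      { apply (HM _ _ _ (HMv m Mm)). apply Hm. exists l; auto. }
      exact (psi_fwd t x Htx l m Hl Hs).
Qed.

Theorem main_result :
  exists pstar : form L (X + sig A) -> Prop,
    S_star C X A pstar /\ (forall phi, p phi -> pstar phi).
Proof.
  destruct (@zorn_opt X (car C) Good) as [t0 [G0 Mx]].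
  { intros Ach H1 H2; apply good_chain; auto. }
  assert (Tot : forall z, exists v, t0 z = Some v).
  { intros z. destruct (t0 z) as [v|] eqn:E; eauto. exfalso.
    destruct (step t0 G0 z E) as [m [Mm Hm]].
    pose proof (good_ext t0 z m G0 Mm Hm) as G'.
    assert (E' := Mx _ G').
    assert (Ex : oext t0 (fun z' => if excluded_middle_informative (z' = z) then Some m else t0 z')).
    { intros k w Hk. destruct excluded_middle_informative; subst; congruence. }
    specialize (E' Ex). apply (f_equal (fun f => f z)) in E'. simpl in E'.
    destruct excluded_middle_informative; congruence. }
  set (c := fun z => cid (Tot z)).
  assert (Hc : forall z, t0 z = Some (c z)) by (intros z; exact (cid_spec (Tot z))).
  assert (Mc : forall z, M (c z)) by (intros z; exact (proj1 G0 z _ (Hc z))).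
  exists (tp C c A). split.
  - split; [apply complete_of; auto|]. exists c. split; [tauto|]. split.
    + intros e Pe. split; [|intros; left; auto].
      intros [H|[z Hz]]; auto. subst. apply HPA; auto.
    + apply complete_of.
      * intros e Pe Me. left; auto.
      * intros e [H|[z Hz]]; [auto|subst; auto].
  - intros phi Hphi. unfold tp.
    destruct (proj2 G0 [phi] ltac:(intros psi0 [E|[]]; subst; auto)) as [d [Hd1 Hd2]].
    specialize (Hd1 phi (or_introl eq_refl)). unfold sat in *. revert Hd1. apply sat_fv.
    intros [z|a] Hz; simpl; auto. symmetry; apply (Hd2 phi z (c z) (or_introl eq_refl) Hz (Hc z)).
Qed.

End Main.

Theorem mainTheorem4 (L : vocab) (C : structure L)
  (HSE : stably_embedded C) (HP0 : P_zero_definable C) (HQE : has_QE C)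
  (Lam : Type) (M : car C -> Prop)
  (HM : elementary C M) (Hsat : saturated C Lam M)
  (A : car C -> Prop)
  (HPA : forall e, Pint C e -> M e -> A e) (HAM : forall e, A e -> M e)
  (X : Type) (HX : card_lt X Lam)
  (p : form L (X + sig A) -> Prop) (Hp : partial_type C A p)
  (Hcard : card_lt (sig p) Lam) :
  exists pstar : form L (X + sig A) -> Prop,
    S_star C X A pstar /\ (forall phi, p phi -> pstar phi).
Proof.
  exact (main_result C M HM Lam Hsat A HPA HAM X HX p Hp Hcard).
Qed.
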